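(* Fix $0<\alpha<1$ and $0<p_1<\frac12<p_2<1$, and suppose $(1-\alpha)(1-p_1)+\alpha(1-p_2)>\frac12$. For each $d\ge1$ let $\mu_d$ be the distribution on $Q_d$ given by \[ \mu_d(X)=(1-\alpha)p_1^{|X|}(1-p_1)^{d-|X|}+\alpha\,p_2^{|X|}(1-p_2)^{d-|X|}. \] (Then $w_i^0=(1-\alpha)(1-p_1)+\alpha(1-p_2)>\frac12$ for every $i$, so the majority point is $\mathbf 0$.) For every $d\ge1$, under $\mu_d$ at least one of the following holds: (a) $\mathbf 0$ is a best response to $\mathbf 0$, and hence $(\mathbf 0,\mathbf 0)$ is an equilibrium; (b) $\mathbf 1$ is a best response to $\mathbf 0$. Moreover, $P_1(\mathbf 1,\mathbf 0)\to\alpha$ as $d\to\infty$; in particular, if $\alpha>\frac12$ then for all sufficiently large $d$, $P_1(\mathbf 1,\mathbf 0)>\frac12$, so $(\mathbf 0,\mathbf 0)$ is not an equilibrium and $\mathbf 1$ is a best response to $\mathbf 0$, while if $\alpha<\frac12$ then for all sufficiently large $d$, $(\mathbf 0,\mathbf 0)$ is an equilibrium.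
   Context: $Q_d=\{0,1\}^d$ with the Hamming distance $d(X,Y)=|\{i: x_i\neq y_i\}|$; $|X|$ is the number of coordinates equal to $1$. For a probability distribution $\mu$ on $Q_d$ (extended additively to subsets), and $A,B\in Q_d$, let $V(A,B)=\{Z: d(Z,A)<d(Z,B)\}$, $T(A,B)=\{Z: d(Z,A)=d(Z,B)\}$, $P_1(A,B)=\mu(V(A,B))+\frac12\mu(T(A,B))$, $P_2(A,B)=\mu(V(B,A))+\frac12\mu(T(A,B))$. $(A,B)$ is an equilibrium if $P_1(A,B)\ge P_1(A',B)$ for all $A'$ and $P_2(A,B)\ge P_2(A,B')$ for all $B'$. $X$ is a best response to $B$ if $P_1(X,B)\ge P_1(X',B)$ for all $X'\in Q_d$. $w_i^0=\mu(\{Z: z_i=0\})$. $\mathbf 0=(0,\dots,0)$, $\mathbf 1=(1,\dots,1)$. *)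

(* Defs.v *)
From HB Require Import structures.
From mathcomp Require Import all_boot all_order all_algebra.
From mathcomp Require Import all_classical all_reals all_analysis.
Set Implicit Arguments. Unset Strict Implicit. Unset Printing Implicit Defensive.
Import Order.TTheory GRing.Theory Num.Theory.
Local Open Scope ring_scope.

(* The hypercube Q_d = {0,1}^d : coordinate i is true iff x_i = 1. *)
Definition cube (d : nat) := {ffun 'I_d -> bool}.

Definition hdist d (X Y : cube d) : nat := #|[set i | X i != Y i]|.

Definition hweight d (X : cube d) : nat := #|[set i | X i]|.

Definition zero_pt d : cube d := [ffun _ => false].
Definition one_pt d : cube d := [ffun _ => true].

Section Game.
Variables (R : realType) (d : nat) (mu : cube d -> R).

Definition muS (S : {set cube d}) : R := \sum_(Z in S) mu Z.

Definition Vor (A B : cube d) : {set cube d} := [set Z | hdist Z A < hdist Z B]%N.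
Definition Tie (A B : cube d) : {set cube d} := [set Z | hdist Z A == hdist Z B].

Definition P1 (A B : cube d) : R := muS (Vor A B) + 2^-1 * muS (Tie A B).
Definition P2 (A B : cube d) : R := muS (Vor B A) + 2^-1 * muS (Tie A B).

Definition equilibrium (A B : cube d) : Prop :=
  (forall A' : cube d, P1 A' B <= P1 A B) /\ (forall B' : cube d, P2 A B' <= P2 A B).

Definition best_response (X B : cube d) : Prop :=
  forall X' : cube d, P1 X' B <= P1 X B.
End Game.

Definition mixture (R : realType) (a p1 p2 : R) (d : nat) (X : cube d) : R :=
  (1 - a) * p1 ^+ hweight X * (1 - p1) ^+ (d - hweight X)
  + a * p2 ^+ hweight X * (1 - p2) ^+ (d - hweight X).

(* Main.v *)
Require Import Defs.
From HB Require Import structures.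
From mathcomp Require Import all_boot all_order all_algebra.
From mathcomp Require Import all_classical all_reals all_analysis.
From mathcomp Require Import zify ring lra.
Import Order.TTheory GRing.Theory Num.Theory.
Import numFieldNormedType.Exports.
Local Open Scope ring_scope.
Set Implicit Arguments. Unset Strict Implicit. Unset Printing Implicit Defensive.
Section Cube.
Variable d : nat.
Definition ecap (Z X : cube d) : nat := #|[set i | Z i && X i]|.

Lemma card_setE (P : pred 'I_d) : #|[set i | P i]| = (\sum_i (P i : nat))%N.
Proof.
rewrite -sum1_card big_mkcond /=; apply: eq_bigr => i _.
by rewrite inE; case: (P i).
Qed.

Lemma hdist_ecap (Z X : cube d) :
  (hdist Z X + (ecap Z X + ecap Z X) = hweight Z + hweight X)%N.
Proof.
rewrite /hdist /ecap /hweight !card_setE -!big_split /=.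
by apply: eq_bigr => i _; case: (Z i); case: (X i).
Qed.

Lemma hdist0 (Z : cube d) : hdist Z (zero_pt d) = hweight Z.
Proof.
rewrite /hdist /hweight; apply: eq_card => i; rewrite !inE ffunE.
by case: (Z i).
Qed.

Lemma ecap_le (Z X : cube d) : (ecap Z X <= hweight X)%N.
Proof.
by apply: subset_leq_card; apply/fintype.subsetP => i; rewrite !inE => /andP[].
Qed.

Variable R : realType.
Definition theta (k j : nat) : R :=
  if (k < j + j)%N then 1 else if k == (j + j)%N then 2^-1 else 0.

Lemma P1_formula (mu : cube d -> R) (X : cube d) :
  P1 mu X (zero_pt d) = \sum_Z mu Z * theta (hweight X) (ecap Z X).
Proof.
rewrite /P1 /muS mulr_sumr (big_mkcond (mem (Vor _ _))) (big_mkcond (mem (Tie _ _))) -big_split /=.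
apply: eq_bigr => Z _; rewrite !inE hdist0.
have H := hdist_ecap Z X.
have -> : (hdist Z X < hweight Z)%N = (hweight X < ecap Z X + ecap Z X)%N.
  by apply/idP/idP => h; lia.
have -> : (hdist Z X == hweight Z)%N = (hweight X == ecap Z X + ecap Z X)%N.
  by apply/eqP/eqP => h; lia.
rewrite /theta; case: ifP => h1; case: ifP => h2; try lia; ring.
Qed.
End Cube.
Section Gen.
Variable R : realType.
Variable d : nat.

Definition wp (p : R) (Z : cube d) : R := p ^+ hweight Z * (1 - p) ^+ (d - hweight Z).
Definition bnm (p : R) (k j : nat) : R := ('C(k, j))%:R * (p ^+ j * (1 - p) ^+ (k - j)).

Lemma pick_sum n e (F : nat -> R) : (e < n)%N ->
  \sum_(j < n) (j == e :> nat)%:R * F j = F e.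
Proof.
move=> h; rewrite (bigD1 (Ordinal h)) //= eqxx mul1r big1 ?addr0 //.
move=> i hi; have -> : (i == e :> nat) = false.
  apply/negbTE; apply: contra hi => /eqP h'; apply/eqP/val_inj => /=; exact: h'.
by rewrite mul0r.
Qed.

Lemma prod_cst (T : pzSemiRingType) (P : pred 'I_d) (c : T) : \prod_(i | P i) c = c ^+ #|[set i | P i]|.
Proof.
rewrite -(prodr_const _ c); apply: eq_bigl => i; by rewrite inE.
Qed.

Lemma poly_gen (p : R) (X : cube d) :
  \sum_(Z : cube d) wp p Z *: 'X^(ecap Z X) = ((1 - p)%:P + p *: 'X) ^+ hweight X.
Proof.
pose F := fun (i : 'I_d) (b : bool) => (if b then p else 1 - p) *: ('X^(b && X i) : {poly R}).
have H1 : \prod_(i < d) \sum_(b : bool) F i b = ((1 - p)%:P + p *: 'X) ^+ hweight X.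
  rewrite /hweight -(prod_cst (fun i => X i)) [RHS]big_mkcond /=; apply: eq_bigr => i _.
  rewrite big_bool /F /=; case: (X i) => /=.
    by rewrite expr1 expr0 addrC -alg_polyC.
  by rewrite expr0 -scalerDl addrC subrK scale1r.
rewrite -H1 bigA_distr_bigA /=; apply: eq_bigr => Z _.
rewrite /F scaler_prod prodrXr; congr (_ *: 'X^_).
  rewrite (bigID (fun i => Z i)) /=.
  rewrite (eq_bigr (fun _ => p)); last by move=> i ->.
  rewrite [X in _ * X](eq_bigr (fun _ => 1 - p)); last by move=> i /negbTE ->.
  rewrite !prod_cst /wp /hweight; congr (_ * _ ^+ _).
  have E := cardC [set i | Z i]; rewrite card_ord in E.
  have E2 : #|[set i | ~~ Z i]| = #|[predC [set i | Z i]]| by apply: eq_card => i; rewrite !inE.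
  lia.
by rewrite /ecap card_setE; apply: eq_bigr => i _; case: (Z i).
Qed.

Lemma coef_binom (p : R) k j : (((1 - p)%:P + p *: 'X) ^+ k)`_j = bnm p k j.
Proof.
rewrite exprDn coef_sum.
rewrite (eq_bigr (fun i : 'I_k.+1 => (i == j :> nat)%:R * (('C(k, i))%:R * (p ^+ i * (1 - p) ^+ (k - i))))); last first.
  move=> i _; rewrite -polyC_exp exprZn mul_polyC scalerA coefMn coefZ coefXn -mulr_natl eq_sym.
  ring.
case: (ltnP k j) => hk.
  rewrite big1 /bnm ?bin_small ?mul0r // => i _.
  have -> : (i == j :> nat) = false by apply/negbTE; have := ltn_ord i; lia.
  by rewrite mul0r.
have hj : (j < k.+1)%N by lia.
by rewrite (pick_sum (fun i => ('C(k, i))%:R * (p ^+ i * (1 - p) ^+ (k - i)))).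
Qed.
End Gen.
Section Sum.
Variable R : realType.
Variable d : nat.

Lemma sum_w_t (p : R) (X : cube d) (t : nat -> R) :
  \sum_(Z : cube d) wp p Z * t (ecap Z X) =
  \sum_(j < (hweight X).+1) bnm p (hweight X) j * t j.
Proof.
have E j : bnm p (hweight X) j = \sum_(Z : cube d) wp p Z * (ecap Z X == j)%:R.
  rewrite -coef_binom -poly_gen coef_sum; apply: eq_bigr => Z _.
  by rewrite coefZ coefXn eq_sym.
under [RHS]eq_bigr => j _ do rewrite E mulr_suml.
rewrite exchange_big /=; apply: eq_bigr => Z _.
under eq_bigr => j _ do rewrite -mulrA.
rewrite -mulr_sumr; congr (_ * _).
under eq_bigr => j _ do rewrite eq_sym.
rewrite (pick_sum t) //; have := ecap_le Z X; lia.
Qed.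

Definition gfun (p : R) (k : nat) : R := \sum_(j < k.+1) bnm p k j * theta R k j.

Lemma P1_mix (a p1 p2 : R) (X : cube d) :
  P1 (mixture a p1 p2 (d:=d)) X (zero_pt d) = (1 - a) * gfun p1 (hweight X) + a * gfun p2 (hweight X).
Proof.
rewrite P1_formula /gfun -!sum_w_t !mulr_sumr -big_split /=.
apply: eq_bigr => Z _; rewrite /mixture /wp; ring.
Qed.
End Sum.
Section Rec.
Variable R : realType.
Implicit Types p : R.

Lemma bnmS p k j : bnm p k.+1 j.+1 = p * bnm p k j + (1 - p) * bnm p k j.+1.
Proof.
rewrite /bnm binS natrD subSS.
case: (ltnP j k) => h.
  have -> : (k - j = (k - j.+1).+1)%N by lia.
  rewrite !exprS; ring.
rewrite (bin_small (n := k) (m := j.+1)); last lia.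
have -> : (k - j.+1 = 0)%N by lia.
rewrite exprS; ring.
Qed.

Lemma bnm0S p k : bnm p k.+1 0 = (1 - p) * bnm p k 0.
Proof. by rewrite /bnm !bin0 !subn0 exprS; ring. Qed.

Lemma bnm_big p k j : (k < j)%N -> bnm p k j = 0.
Proof. by move=> h; rewrite /bnm bin_small // mul0r. Qed.

Lemma gstep p k : gfun p k.+1 - gfun p k =
  \sum_(0 <= j < k.+1) bnm p k j * (p * theta R k.+1 j.+1 + (1 - p) * theta R k.+1 j - theta R k j).
Proof.
have C : \sum_(0 <= j < k.+1) (1 - p) * bnm p k j * theta R k.+1 j =
   (1 - p) * bnm p k 0 * theta R k.+1 0 + \sum_(0 <= j < k.+1) (1 - p) * bnm p k j.+1 * theta R k.+1 j.+1.
  rewrite -(big_nat_recl (k.+1) 0 (fun j => (1 - p) * bnm p k j * theta R k.+1 j)) //.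
  by rewrite [RHS]big_nat_recr //= bnm_big // mulr0 mul0r addr0.
rewrite /gfun -(big_mkord xpredT (fun j => bnm p k.+1 j * theta R k.+1 j)) -(big_mkord xpredT (fun j => bnm p k j * theta R k j)) big_nat_recl //.
rewrite (eq_bigr (fun j => p * bnm p k j * theta R k.+1 j.+1 + (1 - p) * bnm p k j.+1 * theta R k.+1 j.+1)); last first.
  by move=> j _; rewrite bnmS; ring.
rewrite [RHS](eq_bigr (fun j => p * bnm p k j * theta R k.+1 j.+1 + (1 - p) * bnm p k j * theta R k.+1 j - bnm p k j * theta R k j)); last first.
  by move=> j _; ring.
rewrite sumrB big_split /= [in RHS]big_split /= C bnm0S; ring.
Qed.
End Rec.
Section Theta.
Variable R : realType.
Implicit Types p : R.

Lemma theta_even p m j :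
  p * theta R (m + m).+1 j.+1 + (1 - p) * theta R (m + m).+1 j - theta R (m + m) j
  = (j == m)%:R * (p - 2^-1).
Proof.
rewrite /theta; case: (eqVneq j m) => [e1|n1] /=;
  repeat case: ifP => ?; try (exfalso; lia); rewrite ?mulr1n ?mulr0n /=; ring.
Qed.

Lemma theta_odd p m j :
  p * theta R (m + m).+2 j.+1 + (1 - p) * theta R (m + m).+2 j - theta R (m + m).+1 j
  = (j == m)%:R * (p / 2) - (j == m.+1)%:R * ((1 - p) / 2).
Proof.
rewrite /theta; case: (eqVneq j m) => [e1|n1] /=;
  case: (eqVneq j m.+1) => [e2|n2] /=; try (exfalso; lia);
  repeat case: ifP => ?; try (exfalso; lia); rewrite ?mulr1n ?mulr0n /=; lra.
Qed.

Lemma g_even_step p m : gfun p (m + m).+1 = gfun p (m + m) + (p - 2^-1) * bnm p (m + m) m.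
Proof.
have E := gstep p (m + m).
have S : \sum_(0 <= j < (m + m).+1) bnm p (m + m) j *
    (p * theta R (m + m).+1 j.+1 + (1 - p) * theta R (m + m).+1 j - theta R (m + m) j)
    = bnm p (m + m) m * (p - 2^-1).
  rewrite big_mkord.
  under eq_bigr => j _ do rewrite theta_even mulrCA.
  by rewrite (pick_sum (fun j => bnm p (m + m) j * (p - 2^-1))) //; lia.
rewrite S in E; lra.
Qed.

Lemma g_odd_step p m : gfun p (m + m).+2 = gfun p (m + m).+1.
Proof.
have E := gstep p (m + m).+1.
have S : \sum_(0 <= j < (m + m).+2) bnm p (m + m).+1 j *
    (p * theta R (m + m).+2 j.+1 + (1 - p) * theta R (m + m).+2 j - theta R (m + m).+1 j) = 0.
  rewrite big_mkord.
  under eq_bigr => j _ do rewrite theta_odd mulrBr mulrCA [X in _ - X]mulrCA.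
  rewrite sumrB (pick_sum (fun j => bnm p (m + m).+1 j * (p / 2))); last lia.
  rewrite (pick_sum (fun j => bnm p (m + m).+1 j * ((1 - p) / 2))); last lia.
  rewrite /bnm.
  have -> : 'C((m + m).+1, m.+1) = 'C((m + m).+1, m).
    by rewrite -bin_sub; [congr 'C(_, _); lia | lia].
  have -> : ((m + m).+1 - m = m.+1)%N by lia.
  have -> : ((m + m).+1 - m.+1 = m)%N by lia.
  rewrite !exprS; ring.
rewrite S in E; lra.
Qed.
End Theta.
Section Bounds.
Variable R : realType.
Implicit Types p : R.

Lemma theta_ge0 k j : 0 <= theta R k j.
Proof. by rewrite /theta; repeat case: ifP => _; rewrite ?invr_ge0 ?ler0n. Qed.

Lemma theta_le1 k j : theta R k j <= 1.
Proof. rewrite /theta; repeat case: ifP => _; rewrite ?ler01 ?lexx //; rewrite invf_le1; lra. Qed.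

Lemma bnm_ge0 p k j : 0 <= p <= 1 -> 0 <= bnm p k j.
Proof.
move=> /andP[h0 h1]; rewrite /bnm mulr_ge0 ?ler0n ?mulr_ge0 ?exprn_ge0 //; lra.
Qed.

Lemma sum_bnm p k : \sum_(j < k.+1) bnm p k j = 1.
Proof.
have := exprDn (1 - p) p k; rewrite subrK expr1n => ->.
apply: eq_bigr => j _; by rewrite /bnm mulr_natl [p ^+ _ * _]mulrC.
Qed.

Lemma sum_bin k : \sum_(j < k.+1) ('C(k, j))%:R = (1 + 1 : R) ^+ k.
Proof.
rewrite exprDn; apply: eq_bigr => j _; by rewrite !expr1n mul1r.
Qed.

Lemma pow_le (x y : R) m t : 0 <= x -> x <= y -> (t <= m)%N ->
  x ^+ (m + t) * y ^+ (m - t) <= (x * y) ^+ m.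
Proof.
move=> hx hxy htm.
have hy : 0 <= y by lra.
rewrite exprMn exprD.
have -> : y ^+ m = y ^+ t * y ^+ (m - t) by rewrite -exprD subnKC.
rewrite -mulrA; apply: ler_wpM2l; first exact: exprn_ge0.
apply: ler_wpM2r; first exact: exprn_ge0.
by apply: lerXn2r; rewrite ?nnegrE.
Qed.

Lemma g_ge0 p k : 0 <= p <= 1 -> 0 <= gfun p k.
Proof.
move=> hp; apply: sumr_ge0 => j _; apply: mulr_ge0; [exact: bnm_ge0|exact: theta_ge0].
Qed.

Lemma g_le1 p k : 0 <= p <= 1 -> gfun p k <= 1.
Proof.
move=> hp; rewrite -(sum_bnm p k); apply: ler_sum => j _.
rewrite -[X in _ <= X]mulr1; apply: ler_wpM2l; [exact: bnm_ge0|exact: theta_le1].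
Qed.

Lemma four_pow m : (1 + 1 : R) ^+ (m + m) = 4 ^+ m.
Proof. by rewrite exprD -exprMn; congr (_ ^+ _); ring. Qed.

Lemma g_small p m : 0 <= p -> p <= 2^-1 -> gfun p (m + m) <= (4 * (p * (1 - p))) ^+ m.
Proof.
move=> h0 h1.
have hq : p <= 1 - p by lra.
have hpq : 0 <= p <= 1 by apply/andP; split; lra.
have -> : (4 * (p * (1 - p))) ^+ m = \sum_(j < (m + m).+1) ('C(m + m, j))%:R * (p * (1 - p)) ^+ m.
  by rewrite -mulr_suml sum_bin four_pow exprMn.
apply: ler_sum => j _.
have hj := ltn_ord j.
case: (ltnP j m) => hjm.
  rewrite /theta ifF; last lia.
  rewrite ifF; last lia.
  by rewrite mulr0 mulr_ge0 ?ler0n ?exprn_ge0 ?mulr_ge0 //; lra.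
apply: (le_trans (y := bnm p (m + m) j)).
  rewrite -[X in _ <= X]mulr1; apply: ler_wpM2l; [exact: bnm_ge0|exact: theta_le1].
rewrite /bnm; apply: ler_wpM2l; first exact: ler0n.
have := pow_le (m := m) (t := j - m) h0 hq.
have -> : (m + (j - m) = j)%N by lia.
have -> : (m - (j - m) = m + m - j)%N by lia.
apply; lia.
Qed.

Lemma g_large p m : 2^-1 <= p -> p <= 1 -> 1 - gfun p (m + m) <= (4 * (p * (1 - p))) ^+ m.
Proof.
move=> h0 h1.
have hq : 1 - p <= p by lra.
have hq0 : 0 <= 1 - p by lra.
have hpq : 0 <= p <= 1 by apply/andP; split; lra.
have -> : (4 * (p * (1 - p))) ^+ m = \sum_(j < (m + m).+1) ('C(m + m, j))%:R * (p * (1 - p)) ^+ m.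
  by rewrite -mulr_suml sum_bin four_pow exprMn.
rewrite -[X in X - _](sum_bnm p (m + m)) /gfun -sumrB.
apply: ler_sum => j _.
have hj := ltn_ord j.
rewrite -{1}[bnm p _ _]mulr1 -mulrBr.
case: (ltnP m j) => hjm.
  rewrite /theta ifT; last lia.
  by rewrite subrr mulr0 mulr_ge0 ?ler0n ?exprn_ge0 ?mulr_ge0 //; lra.
apply: (le_trans (y := bnm p (m + m) j)).
  rewrite -[X in _ <= X]mulr1; apply: ler_wpM2l; first exact: bnm_ge0.
  have := theta_ge0 (m + m) j; lra.
rewrite /bnm; apply: ler_wpM2l; first exact: ler0n.
have := pow_le (m := m) (t := m - j) hq0 hq.
have -> : (m + (m - j) = m + m - j)%N by lia.
have -> : (m - (m - j) = j)%N by lia.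
by rewrite mulrC [(1 - p) * p]mulrC; apply; lia.
Qed.
End Bounds.
Section SeqMax.
Variable R : realType.
Variable s : nat -> R.
Hypothesis Hprop : forall m, 0 <= s m.+1 - s m -> 0 <= s m.+2 - s m.+1.

Lemma prop_add j n : 0 <= s j.+1 - s j -> 0 <= s (j + n).+1 - s (j + n).
Proof.
move=> h; elim: n => [|n IH]; first by rewrite addn0.
by rewrite addnS; apply: Hprop.
Qed.

Lemma seq_max M m : (m <= M)%N -> s m <= s 0 \/ s m <= s M.
Proof.
elim: M m => [|M IH] m hm.
  by left; have -> : m = 0%N by lia.
case: (leP 0 (s M.+1 - s M)) => hD.
  case: (eqVneq m M.+1) => [->|hne]; first by right.
  have [h|h] := IH m ltac:(lia); first by left.
  by right; lra.
left.
have neg : forall j, (j <= M)%N -> s j.+1 - s j < 0.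
  move=> j hj; case: (ltP (s j.+1 - s j) 0) => // hj0.
  have := prop_add (M - j) hj0.
  have -> : (j + (M - j) = M)%N by lia.
  lra.
elim: m hm => [|m IHm] hm; first by [].
have := neg m ltac:(lia); have := IHm ltac:(lia); lra.
Qed.
End SeqMax.

Section Misc.
Variable R : realType.
Lemma hw_le d (X : cube d) : (hweight X <= d)%N.
Proof. by rewrite /hweight -[X in (_ <= X)%N](card_ord d) max_card. Qed.

Lemma hw0 d : hweight (zero_pt d) = 0%N.
Proof.
rewrite /hweight; apply/eqP; rewrite cards_eq0; apply/eqP/setP => i.
by rewrite !inE ffunE.
Qed.

Lemma hw1 d : hweight (one_pt d) = d.
Proof.
rewrite /hweight -[RHS](card_ord d); apply: eq_card => i.
by rewrite !inE ffunE.
Qed.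

Lemma P2_0 d (mu : cube d -> R) B : P2 mu (zero_pt d) B = P1 mu B (zero_pt d).
Proof.
rewrite /P2 /P1; congr (_ + _ * muS _ _).
by apply/setP => Z; rewrite !inE eq_sym.
Qed.

Lemma br_eq d (mu : cube d -> R) : best_response mu (zero_pt d) (zero_pt d) ->
  equilibrium mu (zero_pt d) (zero_pt d).
Proof. move=> h; split => // B'; rewrite !P2_0; exact: h. Qed.

Lemma x_lt1 (p : R) : 0 < p -> p < 1 -> p != 2^-1 -> 0 <= 4 * (p * (1 - p)) < 1.
Proof.
move=> h0 h1 hne; apply/andP; split; first by apply: mulr_ge0; [lra | apply: mulr_ge0; lra].
have : 0 < (p - 2^-1) ^+ 2.
  by rewrite exprn_even_gt0 //= subr_eq0.
rewrite expr2 => h; nra.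
Qed.

Lemma geo_small (x eps : R) : 0 <= x < 1 -> 0 < eps ->
  exists N, forall n, (N <= n)%N -> x ^+ n <= eps.
Proof.
move=> /andP[h0 h1] he.
have hx : `|x| < 1 by rewrite ger0_norm.
have /cvgrPdist_le /(_ eps he) [N _ HN] := cvg_expr hx.
exists N => n hn; have := HN n hn; rewrite /= sub0r normrN ger0_norm //.
exact: exprn_ge0.
Qed.
End Misc.

Section Main.
Variable R : realType.
Variables a p1 p2 : R.
Hypotheses (ha0 : 0 < a) (ha1 : a < 1)
  (hp10 : 0 < p1) (hp1 : p1 < 2^-1) (hp2 : 2^-1 < p2) (hp21 : p2 < 1)
  (hmaj : 2^-1 < (1 - a) * (1 - p1) + a * (1 - p2)).
#[local] Set Default Proof Using "All".
Local Ltac hh := have ha0' := ha0; have ha1' := ha1; have hp10' := hp10; have hp1' := hp1;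
  have hp2' := hp2; have hp21' := hp21; have hmaj' := hmaj.

Definition fk (k : nat) : R := (1 - a) * gfun p1 k + a * gfun p2 k.
Definition sq (m : nat) : R := fk (m + m).

Lemma gfun0 (p : R) : gfun p 0 = 2^-1.
Proof. by rewrite /gfun big_ord1 /bnm /theta /= bin0 subnn !expr0 !mul1r. Qed.

Lemma fk0 : fk 0 = 2^-1.
Proof. rewrite /fk !gfun0; (hh; lra). Qed.

Lemma fk_odd m : fk (m + m).+1 = sq m.+1.
Proof.
rewrite /sq /fk (_ : (m.+1 + m.+1 = (m + m).+2)%N); last lia.
by rewrite !g_odd_step.
Qed.

Lemma fk_half k : fk k = sq (k.+1 %/ 2)%N.
Proof.
have [m [->|->]] : exists m, k = (m + m)%N \/ k = (m + m).+1.
  by exists (k %/ 2)%N; lia.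
  by rewrite (_ : ((m + m).+1 %/ 2 = m)%N) //; lia.
by rewrite fk_odd (_ : ((m + m).+2 %/ 2 = m.+1)%N) //; lia.
Qed.

Lemma bnm_mid (p : R) m : bnm p (m + m) m = ('C(m + m, m))%:R * (p * (1 - p)) ^+ m.
Proof. by rewrite /bnm exprMn (_ : (m + m - m = m)%N) //; lia. Qed.

Lemma sq_prop m : 0 <= sq m.+1 - sq m -> 0 <= sq m.+2 - sq m.+1.
Proof.
have D n : sq n.+1 - sq n = ('C(n + n, n))%:R *
   ((1 - a) * (p1 - 2^-1) * (p1 * (1 - p1)) ^+ n + a * (p2 - 2^-1) * (p2 * (1 - p2)) ^+ n).
  rewrite -fk_odd /sq /fk !g_even_step !bnm_mid. set h := 2^-1. ring.
have Cpos n : 0 < ('C(n + n, n))%:R :> R by rewrite ltr0n bin_gt0; lia.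
rewrite !D.
set r1 := p1 * (1 - p1); set r2 := p2 * (1 - p2).
have hr1 : 0 < r1 by rewrite /r1; apply: mulr_gt0; (hh; lra).
have hr2 : 0 < r2 by rewrite /r2; apply: mulr_gt0; (hh; lra).
set A := (1 - a) * (2^-1 - p1); set B := a * (p2 - 2^-1).
have hA : 0 < A by rewrite /A; apply: mulr_gt0; (hh; lra).
have hB : 0 < B by rewrite /B; apply: mulr_gt0; (hh; lra).
have hAB : B < A by rewrite /A /B; (hh; lra).
have E n : (1 - a) * (p1 - 2^-1) * r1 ^+ n + a * (p2 - 2^-1) * r2 ^+ n = B * r2 ^+ n - A * r1 ^+ n.
  by rewrite /A /B; ring.
rewrite !E => h.
have h0 : 0 <= B * r2 ^+ m - A * r1 ^+ m.
  by rewrite -(pmulr_rge0 _ (Cpos m)).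
apply: mulr_ge0; first exact: ltW.
have X1 : 0 < r1 ^+ m by exact: exprn_gt0.
have X2 : 0 < r2 ^+ m by exact: exprn_gt0.
case: (leP r1 r2) => hr.
  rewrite !exprSr.
  have := mulr_ge0 (ltW hr2) h0.
  have : 0 <= A * r1 ^+ m * (r2 - r1) by apply: mulr_ge0; [apply: mulr_ge0; (hh; lra)| (hh; lra)].
  move=> h3 h4; (hh; nra).
exfalso.
have : r2 ^+ m <= r1 ^+ m by apply: lerXn2r; rewrite ?nnegrE; (hh; lra).
move=> h5; (hh; nra).
Qed.

Lemma dich k d : (k <= d)%N -> fk k <= fk 0 \/ fk k <= fk d.
Proof.
move=> hk; rewrite (fk_half k) (fk_half d) (_ : fk 0 = sq 0) //.
apply: (seq_max sq_prop); lia.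
Qed.







Lemma P1mixE d (X : cube d) : P1 (mixture a p1 p2 (d:=d)) X (zero_pt d) = fk (hweight X).
Proof. by rewrite P1_mix. Qed.





Lemma main_dich d : (fk d <= fk 0 -> best_response (mixture a p1 p2 (d:=d)) (zero_pt d) (zero_pt d))
  /\ (fk 0 <= fk d -> best_response (mixture a p1 p2 (d:=d)) (one_pt d) (zero_pt d)).
Proof.
split => h X'; rewrite !P1mixE ?hw0 ?hw1;
  have [h'|h'] := dich (hw_le X'); (hh; lra).
Qed.





Lemma fk_bound d : `|a - fk d| <= (4 * (p1 * (1 - p1))) ^+ (d.+1 %/ 2)%N + (4 * (p2 * (1 - p2))) ^+ (d.+1 %/ 2)%N.
Proof.
rewrite fk_half /sq /fk; set u := (d.+1 %/ 2)%N.
have g1a := g_ge0 (p := p1) (u + u)%N ltac:(apply/andP; split; (hh; lra)).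
have g1b := g_small (p := p1) u (ltW hp10) (ltW hp1).
have g2a := g_le1 (p := p2) (u + u)%N ltac:(apply/andP; split; (hh; lra)).
have g2b := g_large (p := p2) u (ltW hp2) (ltW hp21).
set G1 := gfun p1 (u + u) in g1a g1b *.
set G2 := gfun p2 (u + u) in g2a g2b *.
set X1 := (4 * (p1 * (1 - p1))) ^+ u in g1b *.
set X2 := (4 * (p2 * (1 - p2))) ^+ u in g2b *.
rewrite ler_norml; apply/andP; split; (hh; nra).
Qed.

Lemma fk_lim (eps : R) : 0 < eps -> exists N, forall d, (N <= d)%N -> `|a - fk d| <= eps.
Proof.
move=> he.
have he2 : 0 < eps / 2 by (hh; lra).
have [N1 H1] := geo_small (x_lt1 hp10 ltac:(hh; lra) ltac:(rewrite lt_eqF //; (hh; lra))) he2.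
have [N2 H2] := geo_small (x_lt1 (p := p2) ltac:(hh; lra) hp21 ltac:(rewrite gt_eqF //; (hh; lra))) he2.
exists (2 * (N1 + N2))%N => d hd.
apply: (le_trans (fk_bound d)).
have := H1 (d.+1 %/ 2)%N ltac:(lia); have := H2 (d.+1 %/ 2)%N ltac:(lia); (hh; lra).
Qed.
End Main.

Local Open Scope classical_set_scope.

Theorem mainTheorem12 (R : realType) (a p1 p2 : R)
  (ha0 : 0 < a) (ha1 : a < 1)
  (hp10 : 0 < p1) (hp1 : p1 < 2^-1) (hp2 : 2^-1 < p2) (hp21 : p2 < 1)
  (hmaj : 2^-1 < (1 - a) * (1 - p1) + a * (1 - p2)) :
  (forall d : nat, (1 <= d)%N ->
     (best_response (mixture a p1 p2 (d:=d)) (zero_pt d) (zero_pt d)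
      /\ equilibrium (mixture a p1 p2 (d:=d)) (zero_pt d) (zero_pt d))
     \/ best_response (mixture a p1 p2 (d:=d)) (one_pt d) (zero_pt d))
  /\ ((fun d : nat => P1 (mixture a p1 p2 (d:=d)) (one_pt d) (zero_pt d)) @ \oo --> a)
  /\ (2^-1 < a -> \forall d \near \oo,
        2^-1 < P1 (mixture a p1 p2 (d:=d)) (one_pt d) (zero_pt d)
        /\ ~ equilibrium (mixture a p1 p2 (d:=d)) (zero_pt d) (zero_pt d)
        /\ best_response (mixture a p1 p2 (d:=d)) (one_pt d) (zero_pt d))
  /\ (a < 2^-1 -> \forall d \near \oo,
        equilibrium (mixture a p1 p2 (d:=d)) (zero_pt d) (zero_pt d)).
Proof.
have F0 := fk0 ha0 ha1 hp10 hp1 hp2 hp21 hmaj.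
have MD d := main_dich ha0 ha1 hp10 hp1 hp2 hp21 hmaj d.
have LIM := fk_lim ha0 ha1 hp10 hp1 hp2 hp21 hmaj.
have P1one d : P1 (mixture a p1 p2 (d:=d)) (one_pt d) (zero_pt d) = fk a p1 p2 d.
  by rewrite (P1mixE ha0 ha1 hp10 hp1 hp2 hp21 hmaj) hw1.
have P100 d : P1 (mixture a p1 p2 (d:=d)) (zero_pt d) (zero_pt d) = fk a p1 p2 0.
  by rewrite (P1mixE ha0 ha1 hp10 hp1 hp2 hp21 hmaj) hw0.
split.
  move=> d _; case: (leP (fk a p1 p2 d) (fk a p1 p2 0)) => h.
    by left; split; [exact: (MD d).1 h | exact: br_eq ((MD d).1 h)].
  by right; exact: (MD d).2 (ltW h).
split.
  apply/cvgrPdist_le => eps he.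
  have [N HN] := LIM eps he.
  exists N; first by [].
  by move=> d /= hd; rewrite P1one; exact: HN.
split.
  move=> ha.
  have he : 0 < (a - 2^-1) / 2 by lra.
  have [N HN] := LIM _ he.
  exists N; first by [].
  move=> d /= hd; have := HN d hd; rewrite ler_norml => /andP[_ h2].
  have h3 : 2^-1 < fk a p1 p2 d by lra.
  split; first by rewrite P1one.
  split.
    move=> [h _]; have := h (one_pt d); rewrite P1one P100 F0; lra.
  by apply: (MD d).2; rewrite F0; lra.
move=> ha.
have he : 0 < (2^-1 - a) / 2 by lra.
have [N HN] := LIM _ he.
exists N; first by [].
move=> d /= hd; have := HN d hd; rewrite ler_norml => /andP[h2 _].
have h3 : fk a p1 p2 d < 2^-1 by lra.
by apply: br_eq; apply: (MD d).1; rewrite F0; lra.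
Qed.
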